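(* Let $n\ge1$, $\rho\in\mathbb{R}$ with $3+n-3n\rho\neq0$, and let $Q_n$ be the quaternion Lie group with Lie algebra basis $e_1,\dots,e_{4n+3}$ as in the context. Let $g_0$ be a left-invariant metric diagonal in this basis with $g_j(0)=g_1(0)$ for $1\le j\le 4n$, $g_{4n+1}(0)=g_{4n+2}(0)=g_{4n+3}(0)$, and $g_1(0)^2=g_{4n+1}(0)$. Let $g(t)$ be the diagonal left-invariant metric with $g_j(t)=g_1(0)(1+ct)^{\frac{3(1-2n\rho)}{6+2n-6n\rho}}$ ($1\le j\le 4n$), $g_{4n+k}(t)=g_{4n+1}(0)(1+ct)^{\frac{-n(1+3\rho)}{3+n-3n\rho}}$ ($1\le k\le3$), $c=\frac{g_{4n+1}(0)}{g_1(0)^2}(6+2n-6n\rho)$, which is the solution of the Ricci–Bourguignon flow $\partial_tg=-2\mathrm{Ric}+2\rho Rg$ starting at $g_0$. Then $(Q_n,g_0)$ is of Heisenberg type, but the Heisenberg type property is not preserved along $g(t)$: for $t\ne0$ (with $1+ct>0$), the metric Lie algebra of $(Q_n,g(t))$ is not of Heisenberg type.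
   Context: $Q_n$ is the simply connected 2-step nilpotent Lie group whose Lie algebra has basis $X_{1l},X_{2l},X_{3l},X_{4l}$ ($1\le l\le n$), $Z_1,Z_2,Z_3$ with nonzero brackets $[X_{1l},X_{2l}]=-Z_1$, $[X_{1l},X_{3l}]=Z_3$, $[X_{1l},X_{4l}]=Z_2$, $[X_{2l},X_{3l}]=Z_2$, $[X_{2l},X_{4l}]=-Z_3$, $[X_{3l},X_{4l}]=-Z_1$; set $e_i=X_{1i}$, $e_{n+i}=X_{2i}$, $e_{2n+i}=X_{3i}$, $e_{3n+i}=X_{4i}$, $e_{4n+r}=Z_r$, and $g_\alpha=g(e_\alpha,e_\alpha)$. For a 2-step nilpotent Lie algebra with inner product, with center $\mathcal{Z}$ and $\mathcal{V}=\mathcal{Z}^\perp$, define $j(Z):\mathcal{V}\to\mathcal{V}$ for $Z\in\mathcal{Z}$ by $\langle j(Z)X,Y\rangle=\langle Z,[X,Y]\rangle$; the metric Lie algebra is of Heisenberg type if $j(Z)^2=-|Z|^2\mathrm{Id}$ for all $Z\in\mathcal{Z}$. Here $\mathcal{Z}=\mathrm{span}\{Z_1,Z_2,Z_3\}$ and $\mathcal{V}=\mathrm{span}\{e_1,\dots,e_{4n}\}$, with $j$ and norms taken with respect to $g(t)$. *)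

(* Defs.v *)
From HB Require Import structures.
From mathcomp Require Import all_boot all_order all_algebra.
From mathcomp Require Import reals exp.
Set Implicit Arguments. Unset Strict Implicit. Unset Printing Implicit Defensive.
Import Order.TTheory GRing.Theory Num.Theory.
Local Open Scope ring_scope.

(* The Lie algebra of Q_n has dimension 4n+3; basis e_1..e_{4n+3} is indexed
   0-based by 'I_(4n+3):  index k  <->  e_{k+1}.
   e_{i} = X_{1i}, e_{n+i} = X_{2i}, e_{2n+i} = X_{3i}, e_{3n+i} = X_{4i}
   (1 <= i <= n), e_{4n+r} = Z_r.  So 0-based index a < 4n encodes
   X_{(a %/ n)+1, (a %% n)+1}, and 0-based index 4n + r encodes Z_{r+1}. *)
Definition dimQ (n : nat) : nat := (4 * n).+3.

(* [X_{p,l}, X_{q,l}] = coef * Z_{r+1}, for types p q in {0,1,2,3}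
   (0-based: X_1..X_4), returned as (coef, r). *)
Definition qtable {R : pzRingType} (p q : nat) : R * nat :=
  match p, q with
  | 0, 1 => (-1, 0%N)   | 1, 0 => (1, 0%N)
  | 0, 2 => (1, 2%N)    | 2, 0 => (-1, 2%N)
  | 0, 3 => (1, 1%N)    | 3, 0 => (-1, 1%N)
  | 1, 2 => (1, 1%N)    | 2, 1 => (-1, 1%N)
  | 1, 3 => (-1, 2%N)   | 3, 1 => (1, 2%N)
  | 2, 3 => (-1, 0%N)   | 3, 2 => (1, 0%N)
  | _, _ => (0, 0%N)
  end.

(* structure constant: e_c-component of [e_a, e_b] (0-based indices) *)
Definition qconst {R : pzRingType} (n a b c : nat) : R :=
  if [&& (a < 4 * n)%N, (b < 4 * n)%N & (a %% n == b %% n)%N] then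
    let pr := @qtable R (a %/ n) (b %/ n) in
    if c == (4 * n + pr.2)%N then pr.1 else 0
  else 0.

Definition qvec (R : Type) (n : nat) := 'I_(dimQ n) -> R.

Definition qbr {R : pzRingType} (n : nat) (X Y : qvec R n) : qvec R n :=
  fun k => \sum_(i < dimQ n) \sum_(j < dimQ n) X i * Y j * qconst n i j k.

Definition ipg {R : pzRingType} (n : nat) (g : qvec R n) (X Y : qvec R n) : R :=
  \sum_(i < dimQ n) g i * X i * Y i.

Definition inV {R : pzRingType} (n : nat) (X : qvec R n) : Prop :=
  forall i : 'I_(dimQ n), (4 * n <= i)%N -> X i = 0.
Definition inZ {R : pzRingType} (n : nat) (X : qvec R n) : Prop :=
  forall i : 'I_(dimQ n), (i < 4 * n)%N -> X i = 0.

Definition is_jmap {R : pzRingType} (n : nat) (g : qvec R n) (Z : qvec R n)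
  (J : qvec R n -> qvec R n) : Prop :=
  (forall X, inV X -> inV (J X)) /\
  (forall X Y, inV X -> inV Y -> ipg g (J X) Y = ipg g Z (qbr X Y)).

Definition HType {R : pzRingType} (n : nat) (g : qvec R n) : Prop :=
  forall Z : qvec R n, inZ Z ->
  forall J, is_jmap g Z J ->
  forall X, inV X -> J (J X) = (fun i => - ipg g Z Z * X i).

Definition qflow {R : realType} (n : nat) (rho : R) (g0 : qvec R n) (t : R)
  : qvec R n :=
  let g1 := g0 (inord 0) in
  let gz := g0 (inord (4 * n)) in
  let nr : R := n%:R in
  let c := gz / g1 ^+ 2 * (6 + 2 * nr - 6 * nr * rho) in
  fun i => if (i < 4 * n)%N then
             g1 * powR (1 + c * t) (3 * (1 - 2 * nr * rho) / (6 + 2 * nr - 6 * nr * rho))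
           else
             gz * powR (1 + c * t) (- nr * (1 + 3 * rho) / (3 + nr - 3 * nr * rho)).

(* Main.v *)
Require Import Defs.
From HB Require Import structures.
From mathcomp Require Import all_boot all_order all_algebra.
From mathcomp Require Import reals exp.
From mathcomp Require Import ring lra zify.
From Stdlib Require Import FunctionalExtensionality.
Import Order.TTheory GRing.Theory Num.Theory.
Local Open Scope ring_scope.
Set Implicit Arguments. Unset Strict Implicit.

Lemma delta_sum (R : realType) N a (c : R) : (a < N)%N ->
  \sum_(k < N) ((k : nat) == a)%:R * c = c.
Proof.
move=> h; rewrite (bigD1 (Ordinal h)) //= eqxx mul1r big1 ?addr0 //.
move=> k hk; rewrite (_ : ((k : nat) == a) = false) ?mul0r //.
apply/negbTE; apply: contra hk => /eqP e; apply/eqP/val_inj => /=. exact: e.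
Qed.

Lemma sum3 (R : realType) n (f : 'I_(dimQ n) -> R) :
  (forall c : 'I_(dimQ n), (c < 4 * n)%N -> f c = 0) ->
  \sum_(c < dimQ n) f c = f (inord (4 * n + 0)) + f (inord (4 * n + 1)) + f (inord (4 * n + 2)).
Proof.
move=> f0; rewrite /dimQ !big_ord_recr /= big1 ?add0r; last first.
  by move=> i _; apply: f0 => /=.
congr (_ + _ + _); apply: congr1; apply/val_inj; rewrite /= inordK /=; lia.
Qed.

Lemma sum4 (R : realType) n l (G : 'I_(dimQ n) -> R) : (0 < n)%N -> (l < n)%N ->
  (forall k : 'I_(dimQ n), G k != 0 -> (k < 4 * n)%N && (k %% n == l)%N) ->
  \sum_(k < dimQ n) G k =
  G (inord (0 * n + l)) + G (inord (1 * n + l)) + G (inord (2 * n + l)) + G (inord (3 * n + l)).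
Proof.
move=> n0 hl hG.
pose F (k : nat) := G (inord k).
have -> : \sum_(k < dimQ n) G k = \sum_(k < dimQ n) F k.
  by apply: eq_bigr => k _; rewrite /F inord_val.
change (\sum_(k < dimQ n) F k = F (0 * n + l)%N + F (1 * n + l)%N + F (2 * n + l)%N + F (3 * n + l)%N).
have hF : forall k, (k < dimQ n)%N -> F k != 0 -> (k < 4 * n)%N && (k %% n == l)%N.
  by move=> k hk /hG; rewrite inordK.
clearbody F; clear hG.
have key : forall k : 'I_(dimQ n),
    F k = \sum_(s < 4) ((k : nat) == (s * n + l)%N)%:R * F (s * n + l)%N.
  move=> k; rewrite !big_ord_recl big_ord0 /=.
  have [Fk0|Fk0] := eqVneq (F k) 0.
    have z : forall a, ((k : nat) == a)%:R * F a = 0.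
      by move=> a; case: eqP => [<-|]; rewrite ?Fk0 ?mulr0 ?mul0r.
    by rewrite !z Fk0; ring.
  have /andP [k4 /eqP km] := hF k (ltn_ord k) Fk0.
  have hk := divn_eq (k : nat) n; rewrite km in hk.
  have hs : ((k : nat) %/ n < 4)%N by rewrite ltn_divLR // mulnC.
  move: hk hs; case: ((k : nat) %/ n)%N => [|[|[|[|s]]]] // hk _; rewrite hk;
    rewrite /bump /= !eqn_add2r ?eqn_pmul2r //= ?eqxx ?mul0n ?mul1n ?add0n !mul0r ?add0r ?addr0 ?mul1r // .
rewrite (eq_bigr _ (fun k _ => key k)) exchange_big /=.
rewrite (eq_bigr (fun s : 'I_4 => F (s * n + l)%N)); last first.
  move=> s _; apply: delta_sum; have := ltn_ord s; rewrite /dimQ; nia.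
rewrite !big_ord_recl big_ord0 /bump /= !addrA addr0 //.
Qed.
Lemma qconstE (R : realType) n p q l r : (p < 4)%N -> (q < 4)%N -> (l < n)%N ->
  @qconst R n (p * n + l) (q * n + l) (4 * n + r) =
  if r == (@qtable R p q).2 then (@qtable R p q).1 else 0.
Proof.
move=> hp hq hl.
have n0 : (0 < n)%N by lia.
rewrite /qconst.
have -> : [&& (p * n + l < 4 * n)%N, (q * n + l < 4 * n)%N & ((p * n + l) %% n == (q * n + l) %% n)%N] = true.
  rewrite !modnMDl eqxx andbT; apply/andP; split; nia.
rewrite !divnMDl // !divn_small // !addn0 eqn_add2l.
by case: (r == _).
Qed.
Lemma qconst0 (R : realType) n a b c :
  ~~ [&& (a < 4 * n)%N, (b < 4 * n)%N & (a %% n == b %% n)%N] -> @qconst R n a b c = 0.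
Proof. by rewrite /qconst => /negbTE ->. Qed.

Lemma test (n l : nat) : (0 < n)%N -> (n + l == l) = false.
Proof. move=> h. lia. Qed.

Lemma qconst_supp (R : realType) n a b c : @qconst R n a b c != 0 ->
  [&& (a < 4 * n)%N, (b < 4 * n)%N & (a %% n == b %% n)%N].
Proof. by apply: contraR => h; rewrite qconst0. Qed.

Lemma Qlem (R : realType) n (zz : nat -> R) (i m : nat) : (0 < n)%N ->
  (i < 4 * n)%N -> (m < 4 * n)%N -> (forall c, (c < 4 * n)%N -> zz c = 0) ->
  \sum_(c < dimQ n) \sum_(c' < dimQ n) zz c * zz c' *
     \sum_(k < dimQ n) (@qconst R n i k c' * @qconst R n k m c)
  = if i == m then - \sum_(c < dimQ n) zz c ^+ 2 else 0.
Proof.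
move=> n0 hi hm z0.
have [hl|hl] := eqVneq (i %% n)%N (m %% n)%N; last first.
  have -> : (i == m) = false by apply/negbTE; apply: contraNneq hl => ->.
  apply: big1 => c _; apply: big1 => c' _; rewrite big1 ?mulr0 // => k _.
  have [e|e] := eqVneq (i %% n)%N (k %% n)%N.
    rewrite [qconst n k m c]qconst0 ?mulr0 //.
    apply/negP => /and3P [_ _ /eqP e2]; move/eqP: hl; apply; by rewrite e e2.
  rewrite qconst0 ?mul0r //.
  by apply/negP => /and3P [_ _ /eqP e2]; rewrite e2 eqxx in e.
have hl' : (i %% n < n)%N by rewrite ltn_mod.
have hp : (i %/ n < 4)%N by rewrite ltn_divLR // mulnC.
have hq : (m %/ n < 4)%N by rewrite ltn_divLR // mulnC.
have ei := divn_eq i n; have em := divn_eq m n.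
rewrite -hl in em.
move: (i %% n)%N (i %/ n)%N (m %/ n)%N ei em hl' hp hq => l p q -> -> hl' hp hq.
have zc : forall c : 'I_(dimQ n), (c < 4 * n)%N -> zz c = 0 by move=> c hc; apply: z0.
pose T (c' c : nat) := \sum_(s < 4) qconst n (p * n + l) (s * n + l) c' * @qconst R n (s * n + l) (q * n + l) c.
have E : forall c' c : nat, \sum_(k < dimQ n) (qconst n (p * n + l) k c' * @qconst R n k (q * n + l) c) = T c' c.
  move=> c' c; rewrite (@sum4 R n l) //; last first.
    move=> k hk; have : qconst n (p * n + l) k c' != 0 :> R by apply: contraNneq hk => ->; rewrite mul0r.
    move/qconst_supp/and3P => [_ hk4 /eqP e]; rewrite hk4 -e modnMDl modn_small // eqxx //.
  rewrite /T /= !big_ord_recl big_ord0 /bump /= addr0 !addrA !inordK //; rewrite /dimQ; nia.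
transitivity (\sum_(c < dimQ n) \sum_(c' < dimQ n) zz c * zz c' * T c' c).
  by apply: eq_bigr => c _; apply: eq_bigr => c' _; rewrite E.
rewrite sum3; last by move=> c hc; apply: big1 => c' _; rewrite zc // !mul0r.
rewrite !sum3; try by move=> c hc; rewrite (zc c hc) ?expr2 ?mulr0 ?mul0r.
rewrite /T !big_ord_recl !big_ord0 /bump /= !addr0.
rewrite !inordK; try (rewrite /dimQ; lia).
rewrite !qconstE //.
rewrite eqn_add2r eqn_pmul2r //.
clear E T; move: hp hq; case: p => [|[|[|[|p]]]] // _; case: q => [|[|[|[|q]]]] // _; rewrite /bump /=; ring.
Qed.
Definition ek (R : realType) n (k : nat) : qvec R n := fun i => ((i : nat) == k)%:R.

Lemma ip_ek (R : realType) n (g Y : qvec R n) (k : 'I_(dimQ n)) :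
  ipg g Y (@ek R n k) = g k * Y k.
Proof.
rewrite /ipg (bigD1 k) //= /ek eqxx mulr1 big1 ?addr0 // => i hi.
by rewrite (_ : ((i : nat) == k) = false) ?mulr0 //; apply/negbTE.
Qed.

Lemma qbr_ek (R : realType) n (X : qvec R n) (k c : 'I_(dimQ n)) :
  qbr X (@ek R n k) c = \sum_i X i * qconst n i k c.
Proof.
rewrite /qbr; apply: eq_bigr => i _; rewrite (bigD1 k) //= /ek eqxx mulr1 big1 ?addr0 // => j hj.
by rewrite (_ : ((j : nat) == k) = false) ?mulr0 ?mul0r //; apply/negbTE.
Qed.

Lemma inV_ek (R : realType) n (k : nat) : (k < 4 * n)%N -> inV (@ek R n k).
Proof. move=> hk i hi; rewrite /ek (_ : ((i : nat) == k) = false) //; apply/negbTE; lia. Qed.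

Lemma ipZ (R : realType) n (g Z W : qvec R n) b : inZ Z ->
  (forall c : 'I_(dimQ n), (4 * n <= c)%N -> g c = b) ->
  ipg g Z W = b * \sum_c Z c * W c.
Proof.
move=> hZ hg; rewrite /ipg mulr_sumr; apply: eq_bigr => c _.
case: (ltnP c (4 * n)) => h; first by rewrite hZ // mulr0 !mul0r mulr0.
by rewrite hg //; ring.
Qed.

Lemma Jform (R : realType) n (g Z X : qvec R n) J a b :
  (forall k : 'I_(dimQ n), (k < 4 * n)%N -> g k = a) ->
  (forall c : 'I_(dimQ n), (4 * n <= c)%N -> g c = b) ->
  inZ Z -> is_jmap g Z J -> inV X -> forall k : 'I_(dimQ n), (k < 4 * n)%N ->
  a * J X k = b * \sum_c Z c * \sum_i X i * qconst n i k c.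
Proof.
move=> gV gZ hZ [_ hJ] hX k hk.
have := hJ X (@ek R n k) hX (@inV_ek R n k hk).
rewrite ip_ek (ipZ _ hZ gZ) gV // => ->; congr (_ * _).
by apply: eq_bigr => c _; rewrite qbr_ek.
Qed.

Lemma rearr (R : realType) N (Z X : 'I_N -> R) (q : 'I_N -> 'I_N -> 'I_N -> R) (m : 'I_N) :
 \sum_c Z c * \sum_k (\sum_c' Z c' * \sum_i X i * q i k c') * q k m c
 = \sum_i X i * \sum_c \sum_c' Z c * Z c' * \sum_k q i k c' * q k m c.
Proof.
transitivity (\sum_c \sum_k \sum_c' \sum_i Z c * Z c' * X i * q i k c' * q k m c).
  apply: eq_bigr => c _; rewrite mulr_sumr; apply: eq_bigr => k _.
  rewrite mulr_suml mulr_sumr; apply: eq_bigr => c' _.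
  rewrite mulr_sumr mulr_suml mulr_sumr; apply: eq_bigr => i _; ring.
transitivity (\sum_c \sum_c' \sum_k \sum_i Z c * Z c' * X i * q i k c' * q k m c).
  by apply: eq_bigr => c _; exact: exchange_big.
transitivity (\sum_c \sum_c' \sum_i \sum_k Z c * Z c' * X i * q i k c' * q k m c).
  by apply: eq_bigr => c _; apply: eq_bigr => c' _; exact: exchange_big.
transitivity (\sum_c \sum_i \sum_c' \sum_k Z c * Z c' * X i * q i k c' * q k m c).
  by apply: eq_bigr => c _; exact: exchange_big.
rewrite exchange_big; apply: eq_bigr => i _.
rewrite mulr_sumr; apply: eq_bigr => c _; rewrite mulr_sumr; apply: eq_bigr => c' _.
rewrite !mulr_sumr; apply: eq_bigr => k _; ring.
Qed.

Lemma jj (R : realType) n (g Z X : qvec R n) J a b : (0 < n)%N ->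
  (forall k : 'I_(dimQ n), (k < 4 * n)%N -> g k = a) ->
  (forall c : 'I_(dimQ n), (4 * n <= c)%N -> g c = b) ->
  inZ Z -> is_jmap g Z J -> inV X -> forall m : 'I_(dimQ n),
  a ^+ 2 * J (J X) m = - b ^+ 2 * (\sum_c Z c ^+ 2) * X m.
Proof.
move=> n0 gV gZ hZ hJ hX m.
have hJX : inV (J X) := hJ.1 X hX.
have hJJX : inV (J (J X)) := hJ.1 _ hJX.
case: (ltnP m (4 * n)) => hm; last by rewrite hJJX // hX // !mulr0.
rewrite expr2 -mulrA (Jform gV gZ hZ hJ hJX hm).
have e2 : forall c : 'I_(dimQ n), a * \sum_k J X k * qconst n k m c =
    b * \sum_(k < dimQ n) (\sum_(c' < dimQ n) Z c' * \sum_(i < dimQ n) X i * qconst n i k c') * qconst n k m c.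
  move=> c; rewrite !mulr_sumr; apply: eq_bigr => k _.
  case: (ltnP k (4 * n)) => hk.
    by rewrite [LHS]mulrA (Jform gV gZ hZ hJ hX hk) -mulrA.
  rewrite qconst0 ?mulr0 //; apply/negP => /and3P [h _ _]; lia.
rewrite mulrCA mulr_sumr.
rewrite (eq_bigr (fun c : 'I_(dimQ n) => b * (Z c * \sum_(k < dimQ n) (\sum_(c' < dimQ n) Z c' * \sum_(i < dimQ n) X i * qconst n i k c') * qconst n k m c))); last first.
  by move=> c _; rewrite mulrCA e2 mulrCA.
rewrite -mulr_sumr.
rewrite (rearr Z X (fun i k c => qconst n i k c)).
pose zz (c : nat) := Z (inord c).
have z0 : forall c, (c < 4 * n)%N -> zz c = 0.
  by move=> c hc; rewrite /zz hZ // inordK //; rewrite /dimQ; lia.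
have sE : \sum_(c < dimQ n) zz c ^+ 2 = \sum_c Z c ^+ 2.
  by apply: eq_bigr => c _; rewrite /zz inord_val.
have W : forall i : 'I_(dimQ n), X i * (\sum_(c < dimQ n) \sum_(c' < dimQ n) Z c * Z c' * \sum_(k < dimQ n) qconst n i k c' * qconst n k m c)
   = X i * (((i : nat) == m)%:R * - \sum_c Z c ^+ 2).
  move=> i; case: (ltnP i (4 * n)) => hi; last by rewrite hX // !mul0r.
  congr (_ * _).
  transitivity (\sum_(c < dimQ n) \sum_(c' < dimQ n) zz c * zz c' * \sum_(k < dimQ n) (@qconst R n i k c' * @qconst R n k m c)).
    by apply: eq_bigr => c _; apply: eq_bigr => c' _; rewrite /zz !inord_val.
  rewrite Qlem // sE; by case: eqP => _; rewrite /= ?mul1r ?mul0r.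
rewrite (eq_bigr (fun i : 'I_(dimQ n) => X i * (((i : nat) == m)%:R * - \sum_c Z c ^+ 2)) (fun i _ => W i)).
rewrite (bigD1 m) //= eqxx mul1r.
rewrite (_ : \sum_(i < dimQ n | i != m) X i * (((i : nat) == m)%:R * - \sum_c Z c ^+ 2) = 0).
  rewrite addr0; ring.
apply: big1 => i hi; rewrite (_ : ((i : nat) == m) = false) ?mul0r ?mulr0 //; apply/negbTE; exact: hi.
Qed.

Definition Jdef (R : realType) n (a b : R) (Z : qvec R n) (X : qvec R n) : qvec R n :=
  fun k => if (k < 4 * n)%N then b / a * \sum_c Z c * \sum_i X i * qconst n i k c else 0.

Lemma rearr2 (R : realType) N (Z X Y : 'I_N -> R) (q : 'I_N -> 'I_N -> 'I_N -> R) :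
  \sum_k (\sum_c Z c * \sum_i X i * q i k c) * Y k
  = \sum_c Z c * \sum_i \sum_j X i * Y j * q i j c.
Proof.
transitivity (\sum_k \sum_c \sum_i Z c * X i * Y k * q i k c).
  apply: eq_bigr => k _; rewrite mulr_suml; apply: eq_bigr => c _.
  rewrite mulr_sumr mulr_suml; apply: eq_bigr => i _; ring.
rewrite exchange_big; apply: eq_bigr => c _.
rewrite exchange_big mulr_sumr; apply: eq_bigr => i _.
rewrite mulr_sumr; apply: eq_bigr => k _; ring.
Qed.

Lemma Jdef_jmap (R : realType) n (g Z : qvec R n) a b : a != 0 ->
  (forall k : 'I_(dimQ n), (k < 4 * n)%N -> g k = a) ->
  (forall c : 'I_(dimQ n), (4 * n <= c)%N -> g c = b) ->
  inZ Z -> is_jmap g Z (Jdef a b Z).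
Proof.
move=> a0 gV gZ hZ; split.
  by move=> X hX i hi; rewrite /Jdef ltnNge hi.
move=> X Y hX hY; rewrite (ipZ _ hZ gZ) /qbr.
transitivity (b * \sum_(k < dimQ n) (\sum_(c < dimQ n) Z c * \sum_(i < dimQ n) X i * qconst n i k c) * Y k).
  rewrite /ipg mulr_sumr; apply: eq_bigr => k _; rewrite /Jdef.
  case: (ltnP k (4 * n)) => hk; last by rewrite hY // !mulr0.
  rewrite gV //; field.
  by [].
congr (_ * _); exact: (rearr2 Z X Y (fun i k c => qconst n i k c)).
Qed.

Lemma sum_ek (R : realType) n (k : nat) (w : 'I_(dimQ n) -> R) : (k < dimQ n)%N ->
  \sum_c @ek R n k c * w c = w (inord k).
Proof.
move=> hk; rewrite (bigD1 (inord k)) //= /ek inordK // eqxx mul1r big1 ?addr0 //.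
move=> c hc; rewrite (_ : ((c : nat) == k) = false) ?mul0r //.
apply/negbTE; apply: contra hc => /eqP e; apply/eqP/val_inj; rewrite /= inordK //.
Qed.

Lemma HType_sq (R : realType) n (g : qvec R n) a b : (0 < n)%N -> a != 0 -> b != 0 ->
  (forall k : 'I_(dimQ n), (k < 4 * n)%N -> g k = a) ->
  (forall c : 'I_(dimQ n), (4 * n <= c)%N -> g c = b) ->
  HType g -> a ^+ 2 = b.
Proof.
move=> n0 a0 b0 gV gZ H.
pose Z := @ek R n (4 * n). pose X := @ek R n 0.
have hZ : inZ Z by move=> i hi; rewrite /Z /ek (_ : ((i : nat) == 4 * n) = false) //; apply/negbTE; lia.
have hX : inV X by apply: inV_ek; lia.
have hJ := Jdef_jmap a0 gV gZ hZ.
have h1 := H Z hZ _ hJ X hX.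
have h3 := jj n0 gV gZ hZ hJ hX (inord 0).
rewrite h1 in h3.
have X0 : X (inord 0) = 1 by rewrite /X /ek inordK.
have s1 : \sum_c Z c * Z c = 1 by rewrite sum_ek /Z /ek ?inordK ?eqxx //; rewrite /dimQ; lia.
have s2 : \sum_c Z c ^+ 2 = 1 by rewrite -s1; apply: eq_bigr => c _; rewrite expr2.
move: h3; rewrite X0 s2 (ipZ _ hZ gZ) s1 !mulr1 => h3.
apply: (mulIf b0); move: h3; rewrite mulrN => /eqP; rewrite eqr_opp => /eqP ->.
by rewrite expr2.
Qed.

Unset Implicit Arguments.

Theorem proposition2p8 (R : realType) (n : nat) (rho : R) (g0 : qvec R n) :
  (1 <= n)%N ->
  3 + n%:R - 3 * n%:R * rho != 0 ->
  (forall i, 0 < g0 i) ->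
  (forall i : 'I_(dimQ n), (i < 4 * n)%N -> g0 i = g0 (inord 0)) ->
  (forall i : 'I_(dimQ n), (4 * n <= i)%N -> g0 i = g0 (inord (4 * n))) ->
  g0 (inord 0) ^+ 2 = g0 (inord (4 * n)) ->
  HType g0 /\
  (forall t : R, t != 0 ->
     0 < 1 + g0 (inord (4 * n)) / g0 (inord 0) ^+ 2
               * (6 + 2 * n%:R - 6 * n%:R * rho) * t ->
     ~ HType (qflow rho g0 t)).
Proof.
move=> n0 hD gpos hV hZg hsq.
have a0 : g0 (inord 0) != 0 by rewrite lt0r_neq0.
split.
  move=> Z hZ J hJ X hX; apply: functional_extensionality => m.
  have h := jj n0 hV hZg hZ hJ hX m.
  rewrite (ipZ _ hZ hZg).
  have a2 : g0 (inord 0) ^+ 2 != 0 by rewrite expf_neq0.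
  apply: (mulfI a2); rewrite h -hsq.
  have -> : \sum_c Z c * Z c = \sum_c Z c ^+ 2 by apply: eq_bigr => c _; rewrite expr2.
  ring.
move=> t t0 fpos HT.
pose a := qflow rho g0 t (inord 0).
pose b := qflow rho g0 t (inord (4 * n)).
have i0 : nat_of_ord (inord 0 : 'I_(dimQ n)) = 0%N by rewrite inordK.
have i4 : nat_of_ord (inord (4 * n) : 'I_(dimQ n)) = (4 * n)%N by rewrite inordK // /dimQ; lia.
have gV : forall k : 'I_(dimQ n), (k < 4 * n)%N -> qflow rho g0 t k = a.
  by move=> k hk; rewrite /a /qflow /= hk i0 (_ : (0 < 4 * n)%N) //; lia.
have gZ : forall k : 'I_(dimQ n), (4 * n <= k)%N -> qflow rho g0 t k = b.
  by move=> k hk; rewrite /b /qflow /= ltnNge hk i4 ltnn.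
have apos : 0 < a.
  by rewrite /a /qflow /= i0 (_ : (0 < 4 * n)%N) ?mulr_gt0 ?powR_gt0 //; lia.
have bpos : 0 < b.
  by rewrite /b /qflow /= i4 ltnn ?mulr_gt0 ?powR_gt0.
have := HType_sq n0 (lt0r_neq0 apos) (lt0r_neq0 bpos) gV gZ HT.
rewrite /a /b /qflow /= i0 i4 ltnn (_ : (0 < 4 * n)%N); last by lia.
set F := 1 + _ * t.
set P := 3 * _ / _.
set Q := _ / (3 + _ - _).
have E0 : 6 + 2 * n%:R - 6 * n%:R * rho != 0 :> R.
  by rewrite (_ : 6 + 2 * n%:R - 6 * n%:R * rho = 2 * (3 + n%:R - 3 * n%:R * rho)) ?mulf_neq0 ?pnatr_eq0 //; ring.
have PQ : 2 * P - Q = 1 by rewrite /P /Q; field; rewrite hD E0.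
have a2 : g0 (inord 0) ^+ 2 != 0 by rewrite expf_neq0.
rewrite /powR (negbTE (lt0r_neq0 fpos)) exprMn -expRM_natl -hsq => /(mulfI a2) /expR_inj e.
have lnF0 : ln F = 0.
  have : ln F = (2 * P - Q) * ln F by rewrite PQ mul1r.
  by rewrite mulrBl -mulrA e subrr.
have := ln_eq0 fpos; rewrite lnF0 eqxx => /esym/eqP.
rewrite /F -hsq divff // mul1r => /eqP; rewrite -subr_eq0 addrC addKr mulf_eq0 (negbTE E0) (negbTE t0).
by [].
Qed.
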